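(* Let $q$ be a 2way-determined two-atom query over $R$ satisfying the standing assumption below, and let $D$ be a database. If the bipartite graph $H(D,q)$ has no matching saturating $V_1$ (i.e. $D\models\neg\mathrm{Matching}$), then $q$ is certain for $D$.
   Context: $R$ has arity at least $1$ with first $l$ positions forming the key. Facts $R(\bar a)$, atoms $R(\bar x)$; $\mathrm{vars}(A)$ variables of $A$; $\overline{\mathrm{key}}(t)$ tuple of first $l$ entries, $\mathrm{key}(t)$ their set; $a\sim b$ iff equal key tuples. Database: finite set of facts; block: maximal set of pairwise key-equal facts; repair: $\subseteq$-maximal subset with no two distinct key-equal facts. $D\models q(ab)$ means $a=\mu(A)$, $b=\mu(B)\in D$ for some variable-to-element mapping $\mu$ ($a=b$ allowed); $q\{ab\}$ means $q(ab)$ or $q(ba)$; $q$ is certain for $D$ if every repair satisfies $q$. $q=AB$ is 2way-determined if $\mathrm{key}(A)\not\subseteq\mathrm{key}(B)$, $\mathrm{key}(B)\not\subseteq\mathrm{key}(A)$, $\mathrm{key}(A)\subseteq\mathrm{vars}(B)$, $\mathrm{key}(B)\subseteq\mathrm{vars}(A)$. Standing assumption: $\overline{\mathrm{key}}(A)\ne\overline{\mathrm{key}}(B)$ and $q$ not equivalent over consistent databases to a single-atom query. Matching algorithm: the solution graph $G(D,q)$ is the undirected graph on the facts of $D$ with an edge $\{a,b\}$ iff $D\models q\{ab\}$. A connected component $C$ of $G(D,q)$ is a quasi-clique if for all $a,b\in C$ with $a\not\sim b$, $\{a,b\}$ is an edge. For a fact $a$, $\mathrm{clique}(a)$ is the component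 of $a$ if it is a quasi-clique, and $\{a\}$ otherwise. $H(D,q)$ is the bipartite graph with parts $V_1$ = the set of blocks of $D$ and $V_2=\{\mathrm{clique}(a): a\in D\}$, with an edge $(v_1,v_2)$ iff block $v_1$ contains a fact $a\in v_2$ with $D\not\models q(aa)$. $D\models\mathrm{Matching}$ iff $H(D,q)$ has a matching saturating $V_1$. *)

(* Defs.v *)
From mathcomp Require Import all_boot.
From mathcomp Require Import boolp.

Set Implicit Arguments.
Unset Strict Implicit.
Unset Printing Implicit Defensive.

Section CQA.

(* k = arity of R, l = key length (first l positions). *)
Variables (k l : nat).
Variable E : finType.

Definition fact := k.-tuple E.
Definition atom := k.-tuple nat.

Definition keyeq (a b : fact) : bool := take l a == take l b.

Definition consistent (r : {set fact}) : Prop :=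
  forall a b, a \in r -> b \in r -> keyeq a b -> a = b.

Definition repair (D r : {set fact}) : Prop :=
  r \subset D /\ consistent r /\
  (forall r' : {set fact}, r \subset r' -> r' \subset D -> consistent r' -> r' = r).

Definition qab (A B : atom) (D : {set fact}) (a b : fact) : Prop :=
  a \in D /\ b \in D /\
  exists mu : nat -> E, (a : seq E) = map mu A /\ (b : seq E) = map mu B.

Definition satq (A B : atom) (D : {set fact}) : Prop :=
  exists a b, qab A B D a b.

Definition sat_atom (C : atom) (D : {set fact}) : Prop :=
  exists a, a \in D /\ exists mu : nat -> E, (a : seq E) = map mu C.

Definition certain (A B : atom) (D : {set fact}) : Prop :=
  forall r, repair D r -> satq A B r.

Definition sedge (A B : atom) (D : {set fact}) (a b : fact) : bool :=
  `[< qab A B D a b \/ qab A B D b a >].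

Definition component (A B : atom) (D : {set fact}) (a : fact) : {set fact} :=
  [set b in D | connect (sedge A B D) a b].

Definition quasi_clique (A B : atom) (D : {set fact}) (C : {set fact}) : bool :=
  [forall a in C, forall b in C, ~~ keyeq a b ==> sedge A B D a b].

Definition clique (A B : atom) (D : {set fact}) (a : fact) : {set fact} :=
  if quasi_clique A B D (component A B D a) then component A B D a else [set a].

Definition blocks (D : {set fact}) : {set {set fact}} :=
  [set [set b in D | keyeq a b] | a in D].

Definition cliques (A B : atom) (D : {set fact}) : {set {set fact}} :=
  [set clique A B D a | a in D].

Definition hedge (A B : atom) (D : {set fact}) (v1 v2 : {set fact}) : bool :=
  [exists a in v1, (a \in v2) && ~~ `[< qab A B D a a >]].

Definition Matching (A B : atom) (D : {set fact}) : Prop :=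
  exists M : {set {set fact} * {set fact}},
    (forall e, e \in M ->
       [/\ e.1 \in blocks D, e.2 \in cliques A B D & hedge A B D e.1 e.2]) /\
    (forall e e', e \in M -> e' \in M -> e != e' -> e.1 != e'.1 /\ e.2 != e'.2) /\
    (forall v1, v1 \in blocks D -> exists v2, (v1, v2) \in M).

End CQA.

Definition key_vars (l k : nat) (A : k.-tuple nat) : seq nat := take l A.

Definition two_way_determined (k l : nat) (A B : k.-tuple nat) : Prop :=
  ~ {subset key_vars l A <= key_vars l B} /\
  ~ {subset key_vars l B <= key_vars l A} /\
  {subset key_vars l A <= (B : seq nat)} /\
  {subset key_vars l B <= (A : seq nat)}.

Definition standing_assumption (k l : nat) (A B : k.-tuple nat) : Prop :=
  key_vars l A <> key_vars l B /\
  ~ (exists C : k.-tuple nat,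
       forall (E : finType) (D : {set k.-tuple E}),
         consistent l D -> (satq A B D <-> sat_atom C D)).

(* Main.v *)
Require Import Defs.
From mathcomp Require Import all_boot.
From mathcomp Require Import boolp.

Section Aux.
Variables (k l : nat) (E : finType) (A B : k.-tuple nat) (D r : {set k.-tuple E}).
Hypothesis rep : repair l D r.
Hypothesis nsat : ~ satq A B r.

Lemma keyeq_refl (a : k.-tuple E) : keyeq l a a.
Proof. by rewrite /keyeq. Qed.
Lemma keyeq_sym (a b : k.-tuple E) : keyeq l a b -> keyeq l b a.
Proof. by rewrite /keyeq eq_sym. Qed.
Lemma keyeq_trans (a b c : k.-tuple E) : keyeq l a b -> keyeq l b c -> keyeq l a c.
Proof. by rewrite /keyeq => /eqP -> /eqP ->. Qed.

Lemma rD x : x \in r -> x \in D.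
Proof. by case: rep => /subsetP H _ /H. Qed.

Lemma nqab x y : x \in r -> y \in r -> ~ qab A B D x y.
Proof.
move=> xr yr [_ [_ H]]; apply: nsat; exists x, y; split=> //.
Qed.

Lemma in_clique x : x \in D -> x \in clique l A B D x.
Proof.
move=> xD; rewrite /clique; case: ifP => _; last by rewrite in_set1.
by rewrite /component inE xD connect0.
Qed.

Lemma clique_inj x y : x \in r -> y \in r ->
  clique l A B D x = clique l A B D y -> x = y.
Proof.
move=> xr yr E1.
have : y \in clique l A B D x by rewrite E1 in_clique // rD.
rewrite /clique; case: ifP => Hq; last by rewrite in_set1 => /eqP.
move=> yC.
have xC : x \in component A B D x by rewrite /component inE rD // connect0.
move/forallP: Hq => /(_ x); rewrite xC /= => /forallP /(_ y); rewrite yC /=.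
case Hk: (keyeq l x y) => /=.
  by move=> _; case: rep => _ [Hc _]; apply: Hc.
move=> /asboolP [H|H]; exfalso; [exact: nqab _ _ xr yr H | exact: nqab _ _ yr xr H].
Qed.

Lemma block_has a : a \in D -> exists x, x \in [set b in D | keyeq l a b] :&: r.
Proof.
move=> aD; case: (pickP (mem ([set b in D | keyeq l a b] :&: r))) => [x Hx|H0].
  by exists x.
exfalso.
case: rep => sub [cons maxi].
have ar : a \notin r.
  apply/negP => ar; move: (H0 a); rewrite !inE aD keyeq_refl ar //.
have Hc : consistent l (a |: r).
  move=> u v; rewrite !inE => /orP [/eqP->|ur] /orP [/eqP->|vr] //.
  - move=> kv; move: (H0 v); rewrite !inE (rD _ vr) kv vr //.
  - move=> ku; move: (H0 u); rewrite !inE (rD _ ur) (keyeq_sym _ _ ku) ur //.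
  - exact: cons.
have := maxi (a |: r) (subsetUr _ _).
rewrite subUset sub1set aD sub => /(_ isT Hc) Heq.
by move: ar; rewrite -Heq setU11.
Qed.

End Aux.
Arguments keyeq_sym {k l E a b}. Arguments keyeq_trans {k l E a b c}.

Theorem proposition10p2 (k l : nat) (E : finType) (A B : k.-tuple nat)
    (D : {set k.-tuple E}) :
  0 < k -> l <= k ->
  two_way_determined l A B ->
  standing_assumption l A B ->
  ~ Matching l A B D ->
  certain l A B D.
Proof.
move=> _ _ _ _ nM r rep.
apply: contrapT => nsat; apply: nM.
pose M := [set e : {set k.-tuple E} * {set k.-tuple E} |
            (e.1 \in blocks l D) && [exists x in e.1 :&: r, e.2 == clique l A B D x]].
have cons : consistent l r by case: rep => _ [].
have uniq1 : forall v x y, v \in blocks l D -> x \in v :&: r -> y \in v :&: r -> x = y.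
  move=> v x y /imsetP [a aD ->]; rewrite !inE => /andP [/andP [_ kx] xr] /andP [/andP [_ ky] yr].
  apply: cons => //; exact: keyeq_trans (keyeq_sym kx) ky.
have blk : forall v v' x, v \in blocks l D -> v' \in blocks l D -> x \in v -> x \in v' -> v = v'.
  move=> v v' x /imsetP [a aD ->] /imsetP [a' aD' ->]; rewrite !inE => /andP [_ k1] /andP [_ k2].
  apply/setP => z; rewrite !inE; case: (z \in D) => //=.
  apply/idP/idP => H.
    exact: keyeq_trans (keyeq_trans k2 (keyeq_sym k1)) H.
  exact: keyeq_trans (keyeq_trans k1 (keyeq_sym k2)) H.
exists M; split; [|split].
- case=> v1 v2; rewrite inE /= => /andP [vb /exists_inP [x xI /eqP ->]].
  move: (xI); rewrite inE => /andP [xv xr].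
  split => //.
    by apply/imsetP; exists x => //; exact: (rD _ _ _ _ _ rep _ xr).
  apply/exists_inP; exists x => //.
  rewrite in_clique //; last by exact: (rD _ _ _ _ _ rep _ xr).
  by apply/negP => /asboolP; exact: (nqab _ _ _ _ _ _ nsat _ _ xr xr).
- case=> v1 v2 [v1' v2']; rewrite !inE /=.
  move=> /andP [vb /exists_inP [x xI /eqP e2]] /andP [vb' /exists_inP [x' xI' /eqP e2']] ne.
  move: (xI) (xI'); rewrite !inE => /andP [xv xr] /andP [xv' xr'].
  have H1 : v1 != v1'.
    apply/negP => /eqP e1; move: ne; rewrite e1 e2 e2'.
    by rewrite (uniq1 v1' x x' vb' ltac:(by rewrite -e1) xI') eqxx.
  split => //; apply/negP => /eqP e.
  have xx : x = x' by apply: (clique_inj _ _ _ _ _ _ _ rep nsat _ _ xr xr'); rewrite -e2 -e2' e.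
  by move/eqP: H1; apply; apply: (blk _ _ x vb vb' xv); rewrite xx.
- move=> v vb; move: (vb) => /imsetP [a aD ev].
  have [x xI] := block_has _ _ _ _ _ rep _ aD.
  exists (clique l A B D x); rewrite inE /= vb /=.
  by apply/exists_inP; exists x; rewrite ?ev.
Qed.
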